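(* If expressions $e$ and $e'$ are compatible and $[\![C]\!]$ is a total function, then $[\![C^{\langle e,e'\rangle}]\!]$ is a total function.
   Context: $\mathcal A=\langle U,+,\cdot,\mathbf 0,\mathbf 1\rangle$ is a partial semiring ($+$ commutative, associative, possibly partial, unit $\mathbf 0$; $\cdot$ total, associative, unit $\mathbf 1$; two-sided distributivity; $\mathbf 0$ annihilates), naturally ordered ($u\le v$ iff $\exists w.\,u+w=v$ is a partial order), Scott continuous ($+$ and $\cdot$ preserve suprema of directed sets in each argument), with a top element. Infinite sums are suprema of finite partial sums. $\mathcal W(\Sigma)$: maps $m:\Sigma\to U$ with countable support and defined mass, with pointwise operations and order $m_1\sqsubseteq m_2$ iff $m_1+m=m_2$ for some $m$. $\eta(\sigma)(\tau)=\mathbf 1$ if $\sigma=\tau$ else $\mathbf 0$; $f^\dagger(m)(\tau)=\sum_{\sigma\in\mathrm{supp}(m)}m(\sigma)\cdot f(\sigma)(\tau)$. The semantics of iteration is $[\![C^{\langle e,e'\rangle}]\!]=\mathrm{lfp}(\Phi)$, the least fixed point (w.r.t. the pointwise order on functions $\Sigma\to\mathcal W(\Sigma)$) of $\Phi(f)(\sigma)=[\![e]\!](\sigma)\cdot f^\dagger([\![C]\!](\sigma))+[\![e']\!](\sigma)\cdot\eta(\sigma)$. An expression $e$ is a test $b$ (Boolean combination of $\mathsf{true},\mathsf{false}$ and primitive tests $t\subseteq\Sigma$, with $[\![b]\!](\sigma)\in\{\mathbf 0,\mathbf 1\}$, $[\![t]\!](\sigma)=\mathbf 1$ iff $\sigma\in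 t$) or a weight $u\in U$ with $[\![u]\!](\sigma)=u$. Expressions $e,e'$ are compatible if $[\![e]\!](\sigma)+[\![e']\!](\sigma)$ is defined for every $\sigma\in\Sigma$. *)

(* Defs.v *)
From Stdlib Require Import List Classical ClassicalDescription.
Import ListNotations.

Set Implicit Arguments.

Definition nle {U : Type} (padd : U -> U -> option U) (u v : U) : Prop :=
  exists w, padd u w = Some v.

Definition is_ub {U : Type} (le : U -> U -> Prop) (D : U -> Prop) (b : U) : Prop :=
  forall d, D d -> le d b.

Definition is_sup {U : Type} (le : U -> U -> Prop) (D : U -> Prop) (s : U) : Prop :=
  is_ub le D s /\ forall b, is_ub le D b -> le s b.

Definition directed {U : Type} (le : U -> U -> Prop) (D : U -> Prop) : Prop :=
  (exists d, D d) /\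
  forall x y, D x -> D y -> exists z, D z /\ le x z /\ le y z.

Definition obind {A B : Type} (f : A -> option B) (o : option A) : option B :=
  match o with Some a => f a | None => None end.

Record PSemiring := {
  car :> Type;
  padd : car -> car -> option car;
  pmul : car -> car -> car;
  pzero : car;
  pone : car;
  (* + commutative, associative (Kleene equality), unit 0 *)
  padd_comm : forall u v, padd u v = padd v u;
  padd_assoc : forall u v w,
      obind (fun x => padd x w) (padd u v) = obind (fun y => padd u y) (padd v w);
  padd_0 : forall u, padd u pzero = Some u;
  pmul_assoc : forall u v w, pmul u (pmul v w) = pmul (pmul u v) w;
  pmul_1l : forall u, pmul pone u = u;
  pmul_1r : forall u, pmul u pone = u;
  pdistr_l : forall u v w s, padd v w = Some s ->
      padd (pmul u v) (pmul u w) = Some (pmul u s);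
  pdistr_r : forall u v w s, padd v w = Some s ->
      padd (pmul v u) (pmul w u) = Some (pmul s u);
  pmul_0l : forall u, pmul pzero u = pzero;
  pmul_0r : forall u, pmul u pzero = pzero;
  (* naturally ordered: the natural order is a partial order
     (reflexivity and transitivity are automatic) *)
  nle_antisym : forall u v, nle padd u v -> nle padd v u -> u = v;
  has_top : exists t, forall u, nle padd u t;
  dir_sup : forall D, directed (nle padd) D -> exists s, is_sup (nle padd) D s;
  pmul_cont_l : forall D s u, directed (nle padd) D -> is_sup (nle padd) D s ->
      is_sup (nle padd) (fun x => exists d, D d /\ x = pmul u d) (pmul u s);
  pmul_cont_r : forall D s u, directed (nle padd) D -> is_sup (nle padd) D s ->
      is_sup (nle padd) (fun x => exists d, D d /\ x = pmul d u) (pmul s u);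
  padd_cont : forall D s u, directed (nle padd) D -> is_sup (nle padd) D s ->
      (forall d, D d -> exists w, padd u d = Some w) ->
      exists v, padd u s = Some v /\
        is_sup (nle padd) (fun x => exists d, D d /\ padd u d = Some x) v
}.

Arguments padd {_}.
Arguments pmul {_}.
Arguments pzero {_}.
Arguments pone {_}.

Section Sem.
Variable A : PSemiring.

Definition le (u v : A) : Prop := nle padd u v.

Definition fsum (l : list A) : option A :=
  fold_right (fun x acc => obind (padd x) acc) (Some pzero) l.

Definition sum_on {I : Type} (S : I -> Prop) (g : I -> A) (v : A) : Prop :=
  (forall l : list I, NoDup l -> (forall i, In i l -> S i) ->
       exists w, fsum (map g l) = Some w) /\
  is_sup le (fun x => exists l : list I, NoDup l /\ (forall i, In i l -> S i) /\
                          fsum (map g l) = Some x) v.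

Variable Sigma : Type.

Definition supp (m : Sigma -> A) (s : Sigma) : Prop := m s <> pzero.

Definition countable_supp (m : Sigma -> A) : Prop :=
  exists enum : nat -> option Sigma, forall s, supp m s -> exists n, enum n = Some s.

Definition isW (m : Sigma -> A) : Prop :=
  countable_supp m /\ exists v, sum_on (fun _ => True) m v.

Definition Wle (m1 m2 : Sigma -> A) : Prop :=
  exists m, isW m /\ forall t, padd (m1 t) (m t) = Some (m2 t).

Definition Fle (f g : Sigma -> Sigma -> A) : Prop :=
  forall s, Wle (f s) (g s).

Definition eta (s : Sigma) : Sigma -> A :=
  fun t => if excluded_middle_informative (s = t) then pone else pzero.

(* [bind_is f m k]: f^dagger(m) is defined and equals k *)
Definition bind_is (f : Sigma -> Sigma -> A) (m : Sigma -> A) (k : Sigma -> A) : Prop :=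
  forall t, sum_on (supp m) (fun s => pmul (m s) (f s t)) (k t).

Inductive test : Type :=
  | BTrue | BFalse
  | BPrim (t : Sigma -> bool)
  | BNot (b : test)
  | BAnd (b1 b2 : test)
  | BOr (b1 b2 : test).

Fixpoint tsem (b : test) (s : Sigma) : bool :=
  match b with
  | BTrue => true
  | BFalse => false
  | BPrim t => t s
  | BNot b => negb (tsem b s)
  | BAnd b1 b2 => andb (tsem b1 s) (tsem b2 s)
  | BOr b1 b2 => orb (tsem b1 s) (tsem b2 s)
  end.

Inductive expr : Type :=
  | ETest (b : test)
  | EWeight (u : A).

Definition esem (e : expr) (s : Sigma) : A :=
  match e with
  | ETest b => if tsem b s then pone else pzero
  | EWeight u => u
  end.

Definition compatible (e e' : expr) : Prop :=
  forall s, exists w, padd (esem e s) (esem e' s) = Some w.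

(* [Phi_is c e e' f s r]: Phi(f)(s) is defined and equals r, where
   Phi(f)(s) = [[e]](s) . f^dagger([[C]](s)) + [[e']](s) . eta(s)
   and c = [[C]]. *)
Definition Phi_is (c : Sigma -> Sigma -> A) (e e' : expr)
    (f : Sigma -> Sigma -> A) (s : Sigma) (r : Sigma -> A) : Prop :=
  exists k, bind_is f (c s) k /\
    forall t, padd (pmul (esem e s) (k t)) (pmul (esem e' s) (eta s t)) = Some (r t).

Definition is_lfp_iter (c : Sigma -> Sigma -> A) (e e' : expr)
    (f : Sigma -> Sigma -> A) : Prop :=
  (forall s, isW (f s)) /\
  (forall s, Phi_is c e e' f s (f s)) /\
  (forall g, (forall s, isW (g s)) -> (forall s, Phi_is c e e' g s (g s)) -> Fle f g).

End Sem.

Arguments isW {A Sigma}.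
Arguments compatible {A Sigma}.
Arguments is_lfp_iter {A Sigma}.
Arguments Phi_is {A Sigma}.
Arguments Fle {A Sigma}.
Arguments Wle {A Sigma}.

(* Main.v *)
Require Import Defs.
From Stdlib Require Import List Classical ClassicalDescription ClassicalEpsilon Cantor Lia.
Import ListNotations.

Section Alg.
Variable A : PSemiring.
Notation lA := (le A).
Notation "0" := (@pzero A).

Definition fs (l : list A) : A := match fsum A l with Some x => x | None => 0 end.

Lemma assocR (a b c ab r : A) : padd a b = Some ab -> padd ab c = Some r ->
  exists bc, padd b c = Some bc /\ padd a bc = Some r.
Proof.
  intros H1 H2. pose proof (padd_assoc A a b c) as H. rewrite H1 in H. simpl in H.
  rewrite H2 in H. destruct (padd b c) as [bc|] eqn:E; simpl in H; [|discriminate].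
  eauto.
Qed.

Lemma assocL (a b c bc r : A) : padd b c = Some bc -> padd a bc = Some r ->
  exists ab, padd a b = Some ab /\ padd ab c = Some r.
Proof.
  intros H1 H2. pose proof (padd_assoc A a b c) as H. rewrite H1 in H. simpl in H.
  rewrite H2 in H. destruct (padd a b) as [ab|] eqn:E; simpl in H; [|discriminate].
  eauto.
Qed.

Lemma interchange (a b c d ab cd r : A) : padd a b = Some ab -> padd c d = Some cd ->
  padd ab cd = Some r -> exists ac bd, padd a c = Some ac /\ padd b d = Some bd /\ padd ac bd = Some r.
Proof.
  intros H1 H2 H3.
  destruct (assocR _ _ _ _ _ H1 H3) as [x [Hx1 Hx2]].
  destruct (assocL _ _ _ _ _ H2 Hx1) as [bc [Hb1 Hb2]].
  rewrite padd_comm in Hb1.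
  destruct (assocR _ _ _ _ _ Hb1 Hb2) as [bd [Hd1 Hd2]].
  destruct (assocL _ _ _ _ _ Hd2 Hx2) as [ac [Ha1 Ha2]].
  eauto.
Qed.

Lemma le_refl (a : A) : lA a a.
Proof. exists 0. apply padd_0. Qed.

Lemma le_trans (a b c : A) : lA a b -> lA b c -> lA a c.
Proof.
  intros [w Hw] [w' Hw']. destruct (assocR _ _ _ _ _ Hw Hw') as [x [_ Hx]]. exists x; auto.
Qed.

Lemma le_antisym (a b : A) : lA a b -> lA b a -> a = b.
Proof. apply nle_antisym. Qed.

Lemma zero_le (a : A) : lA 0 a.
Proof. exists a. rewrite padd_comm. apply padd_0. Qed.

Lemma le_add_l (a b c : A) : padd a b = Some c -> lA a c.
Proof. intros H; exists b; auto. Qed.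

Lemma le_add_r (a b c : A) : padd a b = Some c -> lA b c.
Proof. intros H; exists a; rewrite padd_comm; auto. Qed.

Lemma down_l (a a' b c' : A) : lA a a' -> padd a' b = Some c' ->
  exists c, padd a b = Some c /\ lA c c'.
Proof.
  intros [w Hw] H.
  destruct (assocR _ _ _ _ _ Hw H) as [wb [H1 H2]].
  rewrite padd_comm in H1.
  destruct (assocL _ _ _ _ _ H1 H2) as [ab [H3 H4]].
  exists ab; split; auto. exists w; auto.
Qed.

Lemma down_r (a b b' c' : A) : lA b b' -> padd a b' = Some c' ->
  exists c, padd a b = Some c /\ lA c c'.
Proof.
  intros Hb H. rewrite padd_comm in H. destruct (down_l _ _ _ _ Hb H) as [c [H1 H2]].
  exists c; split; auto. rewrite padd_comm; auto.
Qed.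

Lemma down2 (a a' b b' c' : A) : lA a a' -> lA b b' -> padd a' b' = Some c' ->
  exists c, padd a b = Some c /\ lA c c'.
Proof.
  intros Ha Hb H. destruct (down_l _ _ _ _ Ha H) as [c1 [H1 H2]].
  destruct (down_r _ _ _ _ Hb H1) as [c [H3 H4]]. exists c; split; auto.
  eapply le_trans; eauto.
Qed.

Lemma add_mono (a a' b b' c c' : A) : lA a a' -> lA b b' -> padd a b = Some c ->
  padd a' b' = Some c' -> lA c c'.
Proof.
  intros Ha Hb H1 H2. destruct (down2 _ _ _ _ _ Ha Hb H2) as [c0 [H3 H4]].
  rewrite H1 in H3; inversion H3; subst; auto.
Qed.

Lemma mul_mono_l (u a b : A) : lA a b -> lA (pmul u a) (pmul u b).
Proof. intros [w Hw]. exists (pmul u w). apply pdistr_l; auto. Qed.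

Lemma mul_mono_r (u a b : A) : lA a b -> lA (pmul a u) (pmul b u).
Proof. intros [w Hw]. exists (pmul w u). apply pdistr_r; auto. Qed.

Lemma add_zero_inv (a b : A) : padd 0 0 = Some a -> a = 0.
Proof. intros H. rewrite padd_0 in H. inversion H; auto. Qed.

Lemma fsum_cons (x : A) l : fsum A (x :: l) = obind (padd x) (fsum A l).
Proof. reflexivity. Qed.

Lemma fsum_cons_inv (x : A) l v : fsum A (x :: l) = Some v ->
  exists w, fsum A l = Some w /\ padd x w = Some v.
Proof. rewrite fsum_cons. destruct (fsum A l); simpl; [eauto|discriminate]. Qed.

Lemma fs_eq l v : fsum A l = Some v -> fs l = v.
Proof. unfold fs; intros H; rewrite H; auto. Qed.

Lemma fsum_zero {I} (g : I -> A) l : (forall i, In i l -> g i = 0) -> fsum A (map g l) = Some 0.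
Proof.
  induction l; simpl; intros H; auto.
  rewrite IHl; auto. simpl. rewrite H; auto. apply padd_0.
Qed.

Lemma fsum_mono {I} (g h : I -> A) l b : (forall i, In i l -> lA (g i) (h i)) ->
  fsum A (map h l) = Some b -> exists a, fsum A (map g l) = Some a /\ lA a b.
Proof.
  revert b; induction l as [|i l IH]; simpl; intros b H Hb.
  - exists 0; split; auto. inversion Hb; apply le_refl.
  - destruct (fsum A (map h l)) as [w|] eqn:E; simpl in Hb; [|discriminate].
    destruct (IH w) as [a [Ha Hle]]; auto.
    rewrite Ha; simpl.
    apply (down2 (g i) (h i) a w b); auto.
Qed.

Lemma fsum_mul_l {I} (g : I -> A) l u v : fsum A (map g l) = Some v ->
  fsum A (map (fun i => pmul u (g i)) l) = Some (pmul u v).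
Proof.
  revert v; induction l as [|i l IH]; simpl; intros v H.
  - inversion H; subst. rewrite pmul_0r; auto.
  - destruct (fsum A (map g l)) as [w|] eqn:E; simpl in H; [|discriminate].
    rewrite (IH w); auto. simpl. apply pdistr_l; auto.
Qed.

Lemma fsum_mul_r {I} (g : I -> A) l u v : fsum A (map g l) = Some v ->
  fsum A (map (fun i => pmul (g i) u) l) = Some (pmul v u).
Proof.
  revert v; induction l as [|i l IH]; simpl; intros v H.
  - inversion H; subst. rewrite pmul_0l; auto.
  - destruct (fsum A (map g l)) as [w|] eqn:E; simpl in H; [|discriminate].
    rewrite (IH w); auto. simpl. apply pdistr_r; auto.
Qed.

Lemma fsum_add {I} (a b h : I -> A) l SA SB S :
  (forall i, In i l -> padd (a i) (b i) = Some (h i)) ->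
  fsum A (map a l) = Some SA -> fsum A (map b l) = Some SB -> padd SA SB = Some S ->
  fsum A (map h l) = Some S.
Proof.
  revert SA SB S; induction l as [|i l IH]; simpl; intros SA SB S Hp HA HB HS.
  - inversion HA; inversion HB; subst. rewrite padd_0 in HS. auto.
  - destruct (fsum A (map a l)) as [a'|] eqn:Ea; simpl in HA; [|discriminate].
    destruct (fsum A (map b l)) as [b'|] eqn:Eb; simpl in HB; [|discriminate].
    destruct (interchange _ _ _ _ _ _ _ HA HB HS) as [ac [bd [H1 [H2 H3]]]].
    rewrite (IH a' b' bd); auto. simpl. rewrite Hp in H1; auto. inversion H1; subst; auto.
Qed.

Lemma fsum_sub {I} (g : I -> A) (l l' : list I) b : NoDup l -> incl l l' ->
  fsum A (map g l') = Some b -> exists a, fsum A (map g l) = Some a /\ lA a b.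
Proof.
  revert l b; induction l' as [|x l' IH]; intros l b Hnd Hinc Hb.
  - destruct l as [|y l]. simpl in *; exists 0; inversion Hb; split; auto; apply le_refl.
    exfalso; apply (Hinc y); simpl; auto.
  - apply fsum_cons_inv in Hb. destruct Hb as [w [Hw Hxw]].
    destruct (classic (In x l)) as [Hin|Hnin].
    + destruct (in_split _ _ Hin) as [l1 [l2 Hl]]. subst l.
      assert (Hnd' : NoDup (l1 ++ l2)) by (eapply NoDup_remove_1; eauto).
      assert (Hx : ~ In x (l1 ++ l2)) by (eapply NoDup_remove_2; eauto).
      destruct (IH (l1 ++ l2) w) as [a [Ha Hle]]; auto.
      { intros y Hy. assert (In y (x :: l')).
        { apply Hinc. apply in_app_or in Hy. apply in_or_app. destruct Hy; simpl; auto. }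
        destruct H; subst; auto. contradiction. }
      assert (Hperm : fsum A (map g (l1 ++ x :: l2)) = fsum A (map g (x :: l1 ++ l2))).
      { clear -l1. induction l1 as [|y l1 IH1]; simpl; auto.
        simpl in IH1. rewrite IH1.
        destruct (fsum A (map g (l1 ++ l2))) as [z|]; simpl; auto.
        pose proof (padd_assoc A (g y) (g x) z) as H1.
        pose proof (padd_assoc A (g x) (g y) z) as H2.
        rewrite (padd_comm A (g x) (g y)) in H2. simpl. transitivity (obind (fun y0 => padd (g y) y0) (padd (g x) z)); [reflexivity|]. rewrite <- H1, H2. reflexivity. }
      rewrite Hperm. simpl. rewrite Ha. simpl.
      destruct (down_r _ _ _ _ Hle Hxw) as [c [Hc Hc']]. eauto.
    + destruct (IH l w) as [a [Ha Hle]]; auto.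
      { intros y Hy. pose proof (Hinc y Hy). destruct H; subst; auto. contradiction. }
      exists a; split; auto. eapply le_trans; eauto. eapply le_add_r; eauto.
Qed.


Lemma sup_unique (D : A -> Prop) a b : is_sup lA D a -> is_sup lA D b -> a = b.
Proof. intros [Ha1 Ha2] [Hb1 Hb2]. apply le_antisym; auto. Qed.

Lemma is_sup_ext (D D' : A -> Prop) s : (forall x, D x <-> D' x) -> is_sup lA D s -> is_sup lA D' s.
Proof.
  intros H [H1 H2]. split.
  - intros d Hd. apply H1, H; auto.
  - intros b Hb. apply H2. intros d Hd. apply Hb, H; auto.
Qed.

Lemma sup_single (D : A -> Prop) s : D s -> (forall x, D x -> lA x s) -> is_sup lA D s.
Proof. intros H1 H2. split; auto. Qed.

Lemma fsum_sup {I J} (P : J -> Prop) (R : J -> J -> Prop) (g : I -> J -> A) (s : I -> A) (l : list I) :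
  (exists j, P j) ->
  (forall j1 j2, P j1 -> P j2 -> exists j3, P j3 /\ R j1 j3 /\ R j2 j3) ->
  (forall i j j', P j -> P j' -> R j j' -> lA (g i j) (g i j')) ->
  (forall i, In i l -> is_sup lA (fun x => exists j, P j /\ x = g i j) (s i)) ->
  (forall j, P j -> exists v, fsum A (map (fun i => g i j) l) = Some v) ->
  exists v, fsum A (map s l) = Some v /\
    is_sup lA (fun x => exists j, P j /\ x = fs (map (fun i => g i j) l)) v.
Proof.
  intros Hne Hdir Hmono.
  induction l as [|i l IH]; intros Hsup Hdef.
  - exists 0; split; auto. split.
    + intros x [j [_ Hx]]. subst. apply le_refl.
    + intros b _. apply zero_le.
  - assert (Htail : forall j, P j -> exists v, fsum A (map (fun i => g i j) l) = Some v).
    { intros j Hj. destruct (Hdef j Hj) as [v Hv]. simpl in Hv.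
      destruct (fsum A (map (fun i => g i j) l)); simpl in Hv; [eauto|discriminate]. }
    destruct IH as [vl [Hvl Hsupl]]; auto. { intros; apply Hsup; simpl; auto. }
    set (T := fun j => fs (map (fun i => g i j) l)).
    assert (HT : forall j, P j -> fsum A (map (fun i => g i j) l) = Some (T j)).
    { intros j Hj. destruct (Htail j Hj) as [v Hv]. unfold T; rewrite Hv; unfold fs; rewrite Hv; auto. }
    assert (Hfull : forall j, P j -> padd (g i j) (T j) = Some (fs (map (fun i => g i j) (i :: l)))).
    { intros j Hj. destruct (Hdef j Hj) as [v Hv]. rewrite (fs_eq _ _ Hv).
      simpl in Hv. rewrite HT in Hv; auto. }
    assert (HTmono : forall j j', P j -> P j' -> R j j' -> lA (T j) (T j')).
    { intros j j' Hj Hj' HR. destruct (fsum_mono (fun i => g i j) (fun i => g i j') l (T j')) as [a [Ha Hle]].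
      - intros; apply Hmono; auto.
      - apply HT; auto.
      - rewrite HT in Ha; auto. inversion Ha; subst; auto. }
    set (D1 := fun x => exists j, P j /\ x = g i j).
    set (D2 := fun x => exists j, P j /\ x = T j).
    assert (Hd1 : directed lA D1).
    { split. destruct Hne as [j Hj]; exists (g i j); exists j; auto.
      intros x y [j1 [Hj1 ->]] [j2 [Hj2 ->]]. destruct (Hdir j1 j2 Hj1 Hj2) as [j3 [Hj3 [H1 H2]]].
      exists (g i j3); split; [exists j3; auto|split; apply Hmono; auto]. }
    assert (Hd2 : directed lA D2).
    { split. destruct Hne as [j Hj]; exists (T j); exists j; auto.
      intros x y [j1 [Hj1 ->]] [j2 [Hj2 ->]]. destruct (Hdir j1 j2 Hj1 Hj2) as [j3 [Hj3 [H1 H2]]].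
      exists (T j3); split; [exists j3; auto|split; apply HTmono; auto]. }
    assert (Hs2 : is_sup lA D2 vl) by (unfold D2, T; auto).
    assert (Hs1 : is_sup lA D1 (s i)) by (apply Hsup; simpl; auto).
    assert (Hstep1 : forall j, P j -> exists w, padd (g i j) vl = Some w /\
               is_sup lA (fun x => exists d, D2 d /\ padd (g i j) d = Some x) w).
    { intros j Hj. apply padd_cont; auto.
      intros d [j' [Hj' ->]]. destruct (Hdir j j' Hj Hj') as [j3 [Hj3 [H1 H2]]].
      destruct (down2 _ _ _ _ _ (Hmono i j j3 Hj Hj3 H1) (HTmono j' j3 Hj' Hj3 H2) (Hfull j3 Hj3)) as [c [Hc _]].
      eauto. }
    destruct (@padd_cont A D1 (s i) vl Hd1 Hs1) as [V [HV HVsup]].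
    { intros d [j [Hj ->]]. destruct (Hstep1 j Hj) as [w [Hw _]]. rewrite padd_comm; eauto. }
    exists V. split.
    { simpl. rewrite Hvl. simpl. rewrite padd_comm; auto. }
    split.
    + intros x [j [Hj ->]]. destruct (Hstep1 j Hj) as [w [Hw _]].
      apply le_trans with w.
      * eapply add_mono; [apply le_refl| |apply Hfull; auto|apply Hw].
        destruct Hsupl as [Hub _]. apply Hub. exists j; auto.
      * destruct HVsup as [Hub _]. apply Hub. exists (g i j). split; [exists j; auto|]. rewrite padd_comm; auto.
    + intros b Hb. destruct HVsup as [_ Hleast]. apply Hleast.
      intros x [d [[j [Hj ->]] Hx]]. rewrite padd_comm in Hx.
      destruct (Hstep1 j Hj) as [w [Hw Hwsup]]. rewrite Hx in Hw; inversion Hw; subst w.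
      destruct Hwsup as [_ Hl2]. apply Hl2.
      intros y [d [[j' [Hj' ->]] Hy]].
      destruct (Hdir j j' Hj Hj') as [j3 [Hj3 [H1 H2]]].
      apply le_trans with (fs (map (fun i => g i j3) (i :: l))).
      * eapply add_mono; [apply (Hmono i j j3); auto|apply (HTmono j' j3); auto|apply Hy|apply Hfull; auto].
      * apply Hb. exists j3; auto.
Qed.

Lemma sup_exchange {J1 J2} (P1 : J1 -> Prop) (P2 : J2 -> Prop) (X : J1 -> J2 -> A) a b Aa Bb :
  (forall j1, P1 j1 -> is_sup lA (fun x => exists j2, P2 j2 /\ x = X j1 j2) (a j1)) ->
  (forall j2, P2 j2 -> is_sup lA (fun x => exists j1, P1 j1 /\ x = X j1 j2) (b j2)) ->
  is_sup lA (fun x => exists j1, P1 j1 /\ x = a j1) Aa ->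
  is_sup lA (fun x => exists j2, P2 j2 /\ x = b j2) Bb -> Aa = Bb.
Proof.
  intros Ha Hb [HA1 HA2] [HB1 HB2]. apply le_antisym.
  - apply HA2. intros x [j1 [Hj1 ->]]. destruct (Ha j1 Hj1) as [_ H]. apply H.
    intros y [j2 [Hj2 ->]]. apply le_trans with (b j2).
    + destruct (Hb j2 Hj2) as [H' _]. apply H'. eauto.
    + apply HB1. eauto.
  - apply HB2. intros x [j2 [Hj2 ->]]. destruct (Hb j2 Hj2) as [_ H]. apply H.
    intros y [j1 [Hj1 ->]]. apply le_trans with (a j1).
    + destruct (Ha j1 Hj1) as [H' _]. apply H'. eauto.
    + apply HA1. eauto.
Qed.

Definition Pl {I} (S : I -> Prop) (l : list I) := NoDup l /\ (forall i, In i l -> S i).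

Lemma sum_on_iff {I} S (g : I -> A) v : sum_on A S g v <->
  (forall l, Pl S l -> exists w, fsum A (map g l) = Some w) /\
  is_sup lA (fun x => exists l, Pl S l /\ x = fs (map g l)) v.
Proof.
  unfold sum_on, Pl. split; intros [H1 H2]; split.
  - intros l [Hl1 Hl2]; auto.
  - revert H2; apply is_sup_ext. intros x; split.
    + intros [l [Hl1 [Hl2 Hx]]]. exists l; split; auto. rewrite (fs_eq _ _ Hx); auto.
    + intros [l [[Hl1 Hl2] Hx]]. exists l; split; auto; split; auto.
      destruct (H1 l Hl1 Hl2) as [w Hw]. rewrite Hx. rewrite Hw. unfold fs; rewrite Hw; auto.
  - intros l Hl1 Hl2; auto.
  - revert H2; apply is_sup_ext. intros x; split.
    + intros [l [[Hl1 Hl2] Hx]]. exists l; split; auto; split; auto.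
      destruct (H1 l (conj Hl1 Hl2)) as [w Hw]. rewrite Hx. rewrite Hw. unfold fs; rewrite Hw; auto.
    + intros [l [Hl1 [Hl2 Hx]]]. exists l; split; auto. rewrite (fs_eq _ _ Hx); auto.
Qed.

Lemma Pl_directed {I} (S : I -> Prop) l1 l2 : Pl S l1 -> Pl S l2 ->
  exists l3, Pl S l3 /\ incl l1 l3 /\ incl l2 l3.
Proof.
  intros [H1 H1'] [H2 H2'].
  set (dec := fun x y : I => excluded_middle_informative (x = y)).
  exists (nodup dec (l1 ++ l2)). split; [split|split].
  - apply NoDup_nodup.
  - intros i Hi. apply nodup_In in Hi. apply in_app_or in Hi. destruct Hi; auto.
  - intros i Hi. apply nodup_In. apply in_or_app; auto.
  - intros i Hi. apply nodup_In. apply in_or_app; auto.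
Qed.

Lemma Pl_nil {I} (S : I -> Prop) : Pl S [].
Proof. split. constructor. intros i []. Qed.

Lemma sum_mono_l {I} (S : I -> Prop) (g : I -> A) l l' : Pl S l -> Pl S l' -> incl l l' ->
  (exists w, fsum A (map g l') = Some w) -> lA (fs (map g l)) (fs (map g l')).
Proof.
  intros [H1 _] _ Hinc [w Hw]. destruct (fsum_sub g l l' w H1 Hinc Hw) as [a [Ha Hle]].
  rewrite (fs_eq _ _ Ha), (fs_eq _ _ Hw); auto.
Qed.

Lemma sum_exists {I} (S : I -> Prop) (g : I -> A) :
  (forall l, Pl S l -> exists w, fsum A (map g l) = Some w) -> exists v, sum_on A S g v.
Proof.
  intros Hdef.
  destruct (@dir_sup A (fun x => exists l, Pl S l /\ x = fs (map g l))) as [v Hv].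
  - split. exists (fs (map g [])). exists []; split; auto; apply Pl_nil.
    intros x y [l1 [Hl1 ->]] [l2 [Hl2 ->]]. destruct (Pl_directed S l1 l2 Hl1 Hl2) as [l3 [Hl3 [Hi1 Hi2]]].
    exists (fs (map g l3)). split; [exists l3; auto|split; apply sum_mono_l with S; auto].
  - exists v. apply sum_on_iff. split; auto.
Qed.

Lemma sum_mono {I} (S : I -> Prop) (g1 g2 : I -> A) v1 v2 :
  sum_on A S g1 v1 -> sum_on A S g2 v2 -> (forall i, S i -> lA (g1 i) (g2 i)) -> lA v1 v2.
Proof.
  intros H1 H2 Hle. apply sum_on_iff in H1. apply sum_on_iff in H2.
  destruct H1 as [_ [_ H1]]. destruct H2 as [Hd2 [Hub2 _]].
  apply H1. intros x [l [Hl ->]].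
  destruct (Hd2 l Hl) as [w Hw].
  destruct (fsum_mono g1 g2 l w) as [a [Ha Ha']].
  { intros i Hi; apply Hle; destruct Hl as [_ Hl]; auto. } auto.
  rewrite (fs_eq _ _ Ha). apply le_trans with w; auto. apply Hub2. exists l; split; auto.
  rewrite (fs_eq _ _ Hw); auto.
Qed.

Lemma sum_zero {I} (S : I -> Prop) (g : I -> A) v :
  sum_on A S g v -> (forall i, S i -> g i = 0) -> v = 0.
Proof.
  intros H Hz. apply sum_on_iff in H. destruct H as [_ [_ H]].
  apply le_antisym; [|apply zero_le]. apply H.
  intros x [l [[_ Hl] ->]]. rewrite (fs_eq _ _ (fsum_zero g l (fun i Hi => Hz i (Hl i Hi)))).
  apply le_refl.
Qed.

End Alg.

Section Fub.
Variable A : PSemiring.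
Notation lA := (le A).

Lemma fubini {I T} (x : I -> T -> A) (l : list I) (L : list T) v :
  (forall t, In t L -> exists w, fsum A (map (fun i => x i t) l) = Some w) ->
  (forall i, In i l -> exists w, fsum A (map (x i) L) = Some w) ->
  fsum A (map (fun i => fs A (map (x i) L)) l) = Some v ->
  fsum A (map (fun t => fs A (map (fun i => x i t) l)) L) = Some v.
Proof.
  revert v; induction l as [|i l IH]; intros v H1 H2 H3.
  - simpl in H3. inversion H3; subst. apply fsum_zero. intros; reflexivity.
  - apply fsum_cons_inv in H3. destruct H3 as [w [Hw Hiw]].
    destruct (H2 i (or_introl eq_refl)) as [SA HSA].
    rewrite (fs_eq _ _ _ HSA) in Hiw.
    apply (fsum_add A (x i) (fun t => fs A (map (fun i => x i t) l)) _ L SA w v); auto.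
    + intros t Ht. destruct (H1 t Ht) as [w' Hw']. simpl in Hw'.
      destruct (fsum A (map (fun i => x i t) l)) as [b'|] eqn:E; simpl in Hw'; [|discriminate].
      rewrite (fs_eq _ _ _ E). simpl map. rewrite (fs_eq A (x i t :: map (fun i => x i t) l) w'); auto.
      simpl. rewrite E. auto.
    + apply IH; auto.
      * intros t Ht. destruct (H1 t Ht) as [w' Hw']. simpl in Hw'.
        destruct (fsum A (map (fun i => x i t) l)) as [b'|] eqn:E; simpl in Hw'; [eauto|discriminate].
      * intros j Hj; apply H2; simpl; auto.
Qed.

Lemma chain_directed (h : nat -> A) : (forall n m, n <= m -> lA (h n) (h m)) ->
  directed lA (fun x => exists n : nat, True /\ x = h n).
Proof.
  intros Hm. split. exists (h 0); exists 0; auto.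
  intros x y [n [_ ->]] [m [_ ->]]. exists (h (Nat.max n m)). split; [exists (Nat.max n m); auto|].
  split; apply Hm; lia.
Qed.

Lemma nat_dir : forall j1 j2 : nat, True -> True -> exists j3, True /\ j1 <= j3 /\ j2 <= j3.
Proof. intros j1 j2 _ _. exists (Nat.max j1 j2). split; auto; split; lia. Qed.

End Fub.

Section Main.
Variables (A : PSemiring) (Sigma : Type) (c : Sigma -> Sigma -> A) (e e' : expr A Sigma).
Hypothesis Hcomp : compatible e e'.
Hypothesis HW : forall s, isW (c s).
Notation lA := (le A).
Notation "0" := (@pzero A).

Definition top : A := epsilon (inhabits 0) (fun t => forall u, lA u t).
Lemma le_top u : lA u top.
Proof. unfold top. apply (epsilon_spec (inhabits 0) (fun t => forall u, lA u t) (has_top A)). Qed.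

Lemma phi_def (s : Sigma) (k y : A) : exists r, padd (pmul (esem e s) k) (pmul (esem e' s) y) = Some r.
Proof.
  destruct (Hcomp s) as [w Hw]. pose proof (@pdistr_r A top _ _ _ Hw) as H.
  destruct (down2 A _ _ _ _ _ (mul_mono_l A (esem e s) _ _ (le_top k)) (mul_mono_l A (esem e' s) _ _ (le_top y)) H) as [r [Hr _]].
  eauto.
Qed.

Lemma mass_fin (s : Sigma) (S : Sigma -> Prop) l : Pl S l -> exists w, fsum A (map (c s) l) = Some w.
Proof.
  intros [Hl _]. destruct (HW s) as [_ [v Hv]]. apply (proj1 Hv); auto.
Qed.

Lemma bind_fin (f : Sigma -> Sigma -> A) s t l : Pl (supp A (c s)) l ->
  exists w, fsum A (map (fun σ => pmul (c s σ) (f σ t)) l) = Some w.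
Proof.
  intros Hl. destruct (mass_fin s _ l Hl) as [W HWl].
  pose proof (fsum_mul_r A (c s) l top W HWl) as H.
  destruct (fsum_mono A (fun σ => pmul (c s σ) (f σ t)) (fun σ => pmul (c s σ) top) l (pmul W top)) as [a [Ha _]]; eauto.
  intros; apply mul_mono_l, le_top.
Qed.

Definition kf (f : Sigma -> Sigma -> A) s t : A :=
  epsilon (inhabits 0) (sum_on A (supp A (c s)) (fun σ => pmul (c s σ) (f σ t))).

Lemma kf_spec f s t : sum_on A (supp A (c s)) (fun σ => pmul (c s σ) (f σ t)) (kf f s t).
Proof.
  unfold kf. apply epsilon_spec. apply sum_exists. intros l Hl; apply bind_fin; auto.
Qed.

Definition addv (x y : A) : A := match padd x y with Some z => z | None => 0 end.
Definition PhiF (f : Sigma -> Sigma -> A) s t : A :=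
  addv (pmul (esem e s) (kf f s t)) (pmul (esem e' s) (eta A s t)).

Lemma PhiF_spec f s t : padd (pmul (esem e s) (kf f s t)) (pmul (esem e' s) (eta A s t)) = Some (PhiF f s t).
Proof.
  unfold PhiF, addv. destruct (phi_def s (kf f s t) (eta A s t)) as [r Hr]. rewrite Hr; auto.
Qed.

Lemma PhiF_mono f g s t : (forall σ t, lA (f σ t) (g σ t)) -> lA (PhiF f s t) (PhiF g s t).
Proof.
  intros H. eapply add_mono; [| apply le_refl | apply PhiF_spec | apply PhiF_spec].
  apply mul_mono_l. eapply sum_mono; [apply kf_spec | apply kf_spec |].
  intros; apply mul_mono_l; auto.
Qed.

Fixpoint F (n : nat) : Sigma -> Sigma -> A :=
  match n with 0 => fun _ _ => 0 | S n => PhiF (F n) end.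

Lemma F_chain n : forall s t, lA (F n s t) (F (S n) s t).
Proof.
  induction n; intros s t. apply zero_le. simpl. apply PhiF_mono. auto.
Qed.

Lemma F_mono n m s t : n <= m -> lA (F n s t) (F m s t).
Proof.
  induction 1. apply le_refl. eapply le_trans; eauto. apply F_chain.
Qed.

Definition Lim s t : A := epsilon (inhabits 0) (is_sup lA (fun x => exists n : nat, True /\ x = F n s t)).

Lemma Lim_spec s t : is_sup lA (fun x => exists n : nat, True /\ x = F n s t) (Lim s t).
Proof.
  unfold Lim. apply epsilon_spec. apply dir_sup. apply chain_directed. intros; apply F_mono; auto.
Qed.

Lemma F_le_Lim n s t : lA (F n s t) (Lim s t).
Proof. apply (proj1 (Lim_spec s t)). exists n; auto. Qed.

Lemma Lim_fix s t : PhiF Lim s t = Lim s t.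
Proof.
  assert (Ha : forall l, Pl (supp A (c s)) l ->
     is_sup lA (fun x => exists n : nat, True /\ x = fs A (map (fun σ => pmul (c s σ) (F n σ t)) l))
       (fs A (map (fun σ => pmul (c s σ) (Lim σ t)) l))).
  { intros l Hl.
    destruct (fsum_sup A (fun _ : nat => True) Peano.le (fun σ n => pmul (c s σ) (F n σ t))
                (fun σ => pmul (c s σ) (Lim σ t)) l) as [v [Hv Hsup]].
    - exists 0%nat; auto.
    - apply nat_dir.
    - intros i j j' _ _ Hjj'. apply mul_mono_l, F_mono; auto.
    - intros i _.
      pose proof (@pmul_cont_l A (fun x => exists n : nat, True /\ x = F n i t) (Lim i t) (c s i)
         (chain_directed A (fun n => F n i t) (fun n m H => F_mono n m i t H)) (Lim_spec i t)) as Hc.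
      revert Hc; apply is_sup_ext.
      intros x; split.
      + intros [d [[n [_ ->]] ->]]. exists n; auto.
      + intros [n [_ ->]]. exists (F n i t); split; auto. exists n; auto.
    - intros j _. apply bind_fin; auto.
    - rewrite (fs_eq _ _ _ Hv). auto. }
  set (K := fun n => kf (F n) s t).
  assert (HKm : forall n m, n <= m -> lA (K n) (K m)).
  { intros n m Hnm. unfold K. eapply sum_mono; [apply kf_spec|apply kf_spec|].
    intros; apply mul_mono_l, F_mono; auto. }
  destruct (@dir_sup A (fun x => exists n : nat, True /\ x = K n) (chain_directed A K HKm)) as [Bb HBb].
  assert (HkB : kf Lim s t = Bb).
  { apply (sup_exchange A (Pl (supp A (c s))) (fun _ : nat => True)
       (fun l n => fs A (map (fun σ => pmul (c s σ) (F n σ t)) l))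
       (fun l => fs A (map (fun σ => pmul (c s σ) (Lim σ t)) l)) K); auto.
    - intros n _. unfold K. apply (proj2 (proj1 (sum_on_iff _ _ _ _) (kf_spec (F n) s t))).
    - apply (proj2 (proj1 (sum_on_iff _ _ _ _) (kf_spec Lim s t))). }
  pose proof (@pmul_cont_l A _ _ (esem e s) (chain_directed A K HKm) HBb) as Hd.
  set (u := pmul (esem e' s) (eta A s t)).
  assert (Hdir2 : directed lA (fun x => exists d, (exists n : nat, True /\ d = K n) /\ x = pmul (esem e s) d)).
  { split. exists (pmul (esem e s) (K 0%nat)). exists (K 0%nat); split; auto. exists 0%nat; auto.
    intros x y [d1 [[n1 [_ ->]] ->]] [d2 [[n2 [_ ->]] ->]].
    exists (pmul (esem e s) (K (Nat.max n1 n2))). split.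
    exists (K (Nat.max n1 n2)); split; auto. exists (Nat.max n1 n2); auto.
    split; apply mul_mono_l, HKm; lia. }
  destruct (@padd_cont A _ _ u Hdir2 Hd) as [V [HV HVsup]].
  { intros d [d' [[n [_ ->]] ->]]. destruct (phi_def s (K n) (eta A s t)) as [r Hr].
    rewrite padd_comm in Hr. eauto. }
  assert (HP : PhiF Lim s t = V).
  { pose proof (PhiF_spec Lim s t) as H. rewrite HkB, padd_comm in H. fold u in H. congruence. }
  rewrite HP.
  apply (sup_unique A (fun x => exists n : nat, True /\ x = F n s t)); [|apply Lim_spec].
  assert (HFS : forall n, padd u (pmul (esem e s) (K n)) = Some (F (S n) s t)).
  { intros n. simpl. rewrite padd_comm. unfold u, K. apply PhiF_spec. }
  split.
  - intros x [n [_ ->]]. destruct n as [|n].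
    + apply zero_le.
    + apply (proj1 HVsup). exists (pmul (esem e s) (K n)). split; auto.
      exists (K n); split; auto. exists n; auto.
  - intros b Hb. apply (proj2 HVsup). intros x [d [[d' [[n [_ ->]] ->]] Hx]].
    rewrite HFS in Hx. inversion Hx; subst. apply Hb. exists (S n); auto.
Qed.


Lemma eta_sum (s : Sigma) (L : list Sigma) : NoDup L -> exists y, fsum A (map (eta A s) L) = Some y.
Proof.
  induction L as [|t L IH]; intros Hnd. exists 0; reflexivity.
  apply NoDup_cons_iff in Hnd. destruct Hnd as [Hn Hnd].
  destruct (classic (s = t)) as [<-|Hst].
  - simpl map. rewrite (fsum_cons A). rewrite (fsum_zero A (eta A s) L).
    + simpl. rewrite padd_0. eexists; reflexivity.
    + intros t' Ht'. unfold eta. destruct (ClassicalDescription.excluded_middle_informative (s = t')); auto.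
      subst; contradiction.
  - destruct (IH Hnd) as [y Hy]. simpl map. rewrite (fsum_cons A), Hy. simpl.
    unfold eta at 1. destruct (ClassicalDescription.excluded_middle_informative (s = t)); [contradiction|].
    rewrite padd_comm, padd_0. eexists; reflexivity.
Qed.

Lemma PhiF_mass f s : (forall σ, isW (f σ)) -> forall L, NoDup L ->
  exists w, fsum A (map (PhiF f s) L) = Some w.
Proof.
  intros HfW L HL.
  assert (HK : exists Kv, fsum A (map (kf f s) L) = Some Kv).
  { destruct (fsum_sup A (Pl (supp A (c s))) (@incl Sigma)
        (fun t l => fs A (map (fun σ => pmul (c s σ) (f σ t)) l)) (kf f s) L) as [v [Hv _]].
    - exists []; apply Pl_nil.
    - intros; apply Pl_directed; auto.
    - intros i j j' Hj Hj' Hjj'. apply sum_mono_l with (supp A (c s)); auto. apply bind_fin; auto.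
    - intros i _. apply (proj2 (proj1 (sum_on_iff _ _ _ _) (kf_spec f s i))).
    - intros l Hl.
      assert (Hm : forall σ, exists m, fsum A (map (f σ) L) = Some m).
      { intros σ. destruct (HfW σ) as [_ [v Hv]]. apply (proj1 Hv); auto. }
      assert (Hin : forall σ, In σ l -> exists w, fsum A (map (fun t => pmul (c s σ) (f σ t)) L) = Some w).
      { intros σ _. destruct (Hm σ) as [m Hmm]. eexists. apply fsum_mul_l; eauto. }
      assert (Hout : exists v, fsum A (map (fun σ => fs A (map (fun t => pmul (c s σ) (f σ t)) L)) l) = Some v).
      { destruct (mass_fin s _ l Hl) as [W HWl].
        pose proof (fsum_mul_r A (c s) l top W HWl) as H.
        destruct (fsum_mono A (fun σ => fs A (map (fun t => pmul (c s σ) (f σ t)) L))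
                     (fun σ => pmul (c s σ) top) l (pmul W top)) as [a [Ha _]]; eauto.
        intros σ _. destruct (Hm σ) as [m Hmm]. rewrite (fs_eq _ _ _ (fsum_mul_l A (f σ) L (c s σ) m Hmm)).
        apply mul_mono_l, le_top. }
      destruct Hout as [v Hv]. exists v.
      apply (fubini A (fun σ t => pmul (c s σ) (f σ t)) l L v); auto.
      intros t _. apply bind_fin; auto.
    - eauto. }
  destruct HK as [Kv HKv].
  destruct (eta_sum s L HL) as [Y HY].
  destruct (phi_def s Kv Y) as [r Hr].
  exists r. eapply fsum_add; [intros i _; apply PhiF_spec | apply fsum_mul_l; eauto | apply fsum_mul_l; eauto | auto].
Qed.

Definition enum_c (s : Sigma) : nat -> option Sigma :=
  epsilon (inhabits (fun _ : nat => @None Sigma))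
    (fun en => forall σ, supp A (c s) σ -> exists n, en n = Some σ).

Lemma enum_c_spec s σ : supp A (c s) σ -> exists n, enum_c s n = Some σ.
Proof.
  revert σ. unfold enum_c. apply (epsilon_spec (inhabits (fun _ : nat => @None Sigma))
    (fun en => forall σ, supp A (c s) σ -> exists n, en n = Some σ)).
  destruct (HW s) as [H _]. exact H.
Qed.

Fixpoint E (n : nat) : Sigma -> nat -> option Sigma :=
  match n with
  | O => fun _ _ => None
  | S n => fun s k =>
      match Cantor.of_nat k with
      | (O, _) => Some s
      | (S i, j) => match enum_c s i with Some σ => E n σ j | None => None end
      end
  end.

Lemma PhiF_zero f s t : kf f s t = 0 -> eta A s t = 0 -> PhiF f s t = 0.
Proof.
  intros H1 H2. pose proof (PhiF_spec f s t) as H. rewrite H1, H2, !pmul_0r, padd_0 in H.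
  inversion H; auto.
Qed.

Lemma E_spec n : forall s t, F n s t <> 0 -> exists k, E n s k = Some t.
Proof.
  induction n as [|n IH]; intros s t Hne.
  - simpl in Hne. contradiction.
  - destruct (classic (s = t)) as [<-|Hst].
    + exists (Cantor.to_nat (0%nat, 0%nat)). cbn [E]. rewrite Cantor.cancel_of_to. auto.
    + assert (Heta : eta A s t = 0).
      { unfold eta. destruct (ClassicalDescription.excluded_middle_informative (s = t)); [contradiction|auto]. }
      assert (Hk : kf (F n) s t <> 0).
      { intros Hk. apply Hne. simpl. apply PhiF_zero; auto. }
      assert (Hex : exists σ, supp A (c s) σ /\ F n σ t <> 0).
      { apply NNPP. intros Hno. apply Hk. eapply sum_zero; [apply kf_spec|].
        intros σ Hσ. destruct (classic (F n σ t = 0)) as [Hz|Hz].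
        - rewrite Hz, pmul_0r; auto.
        - exfalso; apply Hno; eauto. }
      destruct Hex as [σ [Hσ Hf]].
      destruct (enum_c_spec s σ Hσ) as [i Hi].
      destruct (IH σ t Hf) as [j Hj].
      exists (Cantor.to_nat (S i, j)). cbn [E]. rewrite Cantor.cancel_of_to. rewrite Hi. auto.
Qed.

Lemma F_W n : forall s, isW (F n s).
Proof.
  induction n as [|n IH]; intros s; split.
  - exists (E 0 s). intros t Ht. apply E_spec; auto.
  - apply sum_exists. intros l _. exists 0. apply fsum_zero; auto.
  - exists (E (S n) s). intros t Ht. apply E_spec; auto.
  - apply sum_exists. intros l [Hl _]. simpl. apply PhiF_mass; auto.
Qed.

Lemma Lim_W s : isW (Lim s).
Proof.
  split.
  - exists (fun k => let (n, j) := Cantor.of_nat k in E n s j).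
    intros t Ht.
    assert (Hex : exists n, F n s t <> 0).
    { apply NNPP. intros Hno. apply Ht.
      apply (sup_unique A (fun x => exists n : nat, True /\ x = F n s t)); [apply Lim_spec|].
      apply sup_single. exists 0%nat; auto.
      intros x [n [_ ->]]. destruct (classic (F n s t = 0)) as [Hz|Hz].
      - rewrite Hz; apply le_refl.
      - exfalso; apply Hno; eauto. }
    destruct Hex as [n Hn]. destruct (E_spec n s t Hn) as [j Hj].
    exists (Cantor.to_nat (n, j)). rewrite Cantor.cancel_of_to. auto.
  - apply sum_exists. intros L [HL _].
    destruct (fsum_sup A (fun _ : nat => True) Peano.le (fun t n => F n s t) (Lim s) L) as [v [Hv _]].
    + exists 0%nat; auto.
    + apply nat_dir.
    + intros i j j' _ _ H. apply F_mono; auto.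
    + intros i _. apply Lim_spec.
    + intros j _. destruct (F_W j s) as [_ [v Hv]]. apply (proj1 Hv); auto.
    + eauto.
Qed.

Lemma W_below (m m' : Sigma -> A) : isW m' -> (forall t, lA (m t) (m' t)) -> isW m.
Proof.
  intros [[en Hen] [v Hv]] Hle. split.
  - exists en. intros t Ht. apply Hen. intros Hz. apply Ht.
    apply le_antisym; [rewrite <- Hz; auto | apply zero_le].
  - apply sum_exists. intros L [HL _]. destruct (proj1 Hv L HL (fun _ _ => I)) as [w Hw].
    destruct (fsum_mono A m m' L w) as [a [Ha _]]; eauto.
Qed.

Lemma F_le_g (g : Sigma -> Sigma -> A) : (forall s, Phi_is c e e' g s (g s)) ->
  forall n s t, lA (F n s t) (g s t).
Proof.
  intros Hg n. induction n as [|n IH]; intros s t.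
  - apply zero_le.
  - destruct (Hg s) as [k [Hb Hp]]. simpl.
    eapply add_mono; [| apply le_refl | apply PhiF_spec | apply Hp].
    apply mul_mono_l. eapply sum_mono; [apply kf_spec | apply (Hb t) |].
    intros; apply mul_mono_l; auto.
Qed.

Lemma main_lfp : exists f : Sigma -> Sigma -> A, is_lfp_iter c e e' f.
Proof.
  exists Lim. split; [|split].
  - apply Lim_W.
  - intros s. exists (kf Lim s). split.
    + intros t; apply kf_spec.
    + intros t. rewrite <- (Lim_fix s t). apply PhiF_spec.
  - intros g HgW Hg s.
    assert (Hle : forall t, lA (Lim s t) (g s t)).
    { intros t. apply (proj2 (Lim_spec s t)). intros x [n [_ ->]]. apply F_le_g; auto. }
    set (m := fun t => epsilon (inhabits 0) (fun w => padd (Lim s t) w = Some (g s t))).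
    assert (Hm : forall t, padd (Lim s t) (m t) = Some (g s t)).
    { intros t. unfold m. apply epsilon_spec. apply Hle. }
    exists m. split; auto.
    apply W_below with (g s); auto. intros t. eapply le_add_r; eauto.
Qed.

End Main.

Theorem lemmaA9 (A : PSemiring) (Sigma : Type)
    (c : Sigma -> Sigma -> A) (e e' : expr A Sigma) :
  compatible e e' ->
  (forall s, isW (c s)) ->
  exists f : Sigma -> Sigma -> A, is_lfp_iter c e e' f.
Proof.
  intros Hc HW. apply main_lfp; auto.
Qed.
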